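(* For $N\ge 5$, let $\mathrm{Cir}^4_N$ be the graph on vertices $1,\dots,N$ arranged in a cycle, in which each vertex is adjacent to the 2 nearest vertices clockwise and the 2 nearest counter-clockwise, and let $\mathrm{Cir}^2_N$ be the cycle graph on the same vertices in the same cyclic order. Then \[ 0.138<\liminf_{N\to\infty}\rho(\mathrm{Cir}^4_N,\mathrm{Cir}^2_N)\le\limsup_{N\to\infty}\rho(\mathrm{Cir}^4_N,\mathrm{Cir}^2_N)<0.34. \]
   Context: Moran Birth-death process on two graphs (neutral case): $G^A$ and $G^B$ are connected undirected simple graphs on the same vertex set $\{1,\dots,N\}$. Every vertex is occupied by exactly one individual, of type $A$ (mutant) or type $B$ (resident). In each discrete time step, one individual is chosen uniformly at random among all $N$ individuals to reproduce; its offspring (of the same type) replaces the individual at a vertex chosen uniformly at random among the neighbors of the parent's vertex, where neighbors are taken in $G^A$ if the parent is of type $A$ and in $G^B$ if the parent is of type $B$. The all-$A$ and all-$B$ states are absorbing. The fixation probability $\rho(G^A,G^B)$ is the probability that the process reaches the all-$A$ state when started from exactly one type-$A$ individual at a uniformly random vertex, all other vertices of type $B$. *)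

(* Defs.v *)
From HB Require Import structures.
From mathcomp Require Import all_boot all_order all_algebra.
From mathcomp Require Import all_classical all_reals all_analysis.
Set Implicit Arguments. Unset Strict Implicit. Unset Printing Implicit Defensive.
Import Order.TTheory GRing.Theory Num.Theory.
Import numFieldNormedType.Exports.
Local Open Scope ring_scope.

(* A configuration: true = type A (mutant) at vertex v, false = type B. *)
Definition config (N : nat) := {ffun 'I_N -> bool}.

Definition deg (N : nat) (e : rel 'I_N) (u : 'I_N) : nat := #|[set v | e u v]|.

Definition upd (N : nat) (s : config N) (v : 'I_N) (b : bool) : config N :=
  [ffun w => if w == v then b else s w].

Definition allA (N : nat) : config N := [ffun => true].

Definition single (N : nat) (v : 'I_N) : config N := [ffun w => w == v].

(* One step of the backward (Kolmogorov) equation of the Moran Birth-death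
   chain on two graphs GA (used by type-A parents) and GB (type-B parents):
   (step h) s = E_s[ h(X_1) ]. *)
Definition step (R : realType) (N : nat) (GA GB : rel 'I_N)
    (h : config N -> R) (s : config N) : R :=
  \sum_(u : 'I_N)
    \sum_(v : 'I_N | (if s u then GA else GB) u v)
      (N%:R^-1 * (deg (if s u then GA else GB) u)%:R^-1) * h (upd s v (s u)).

Fixpoint hitA (R : realType) (N : nat) (GA GB : rel 'I_N) (t : nat)
    (s : config N) : R :=
  match t with
  | 0 => if s == allA N then 1 else 0
  | t'.+1 => step GA GB (@hitA R N GA GB t') s
  end.

(* Since all-A is absorbing,
   this is the limit as t -> oo of P(X_t = all-A). *)
Definition rho (R : realType) (N : nat) (GA GB : rel 'I_N) : R :=
  limn (fun t => N%:R^-1 * \sum_(v : 'I_N) @hitA R N GA GB t (single v)).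

Definition cyc_step (N : nat) (i j : 'I_N) (k : nat) : bool :=
  (j == (i + k) %% N :> nat)%N || (i == (j + k) %% N :> nat)%N.

Definition Cir4 (N : nat) : rel 'I_N :=
  fun i j => (i != j) && (cyc_step i j 1 || cyc_step i j 2).

Definition Cir2 (N : nat) : rel 'I_N :=
  fun i j => (i != j) && cyc_step i j 1.

(* Main.v *)
Require Import Defs.
From HB Require Import structures.
From mathcomp Require Import all_boot all_order all_algebra.
From mathcomp Require Import all_classical all_reals all_analysis.
From mathcomp Require Import ring lra zify.
Set Implicit Arguments. Unset Strict Implicit. Unset Printing Implicit Defensive.
Import Order.TTheory GRing.Theory Num.Theory.
Import numFieldNormedType.Exports.
Local Open Scope ring_scope.
Section Cyc.
Variable n : nat.
Local Notation N := n.+3.+2.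
Local Notation T := 'I_N.

Lemma valD (u : T) k : val (u + k%:R) = ((u + k) %% N)%N.
Proof. by rewrite /= Zp_nat /= modnDmr. Qed.

Lemma natr_neq0 k : (0 < k < N)%N -> (k%:R : T) != 0.
Proof.
move=> /andP[k0 kN]; apply/eqP => /(congr1 val); rewrite Zp_nat /= modn_small //.
by move=> e; rewrite e in k0.
Qed.

Lemma cyc_stepE (u v : T) k : (0 < k < N)%N ->
  cyc_step u v k = (v == u + k%:R) || (v == u - k%:R).
Proof.
move=> hk; rewrite /cyc_step -!valD !val_eqE; congr (_ || _).
by rewrite [in RHS]eq_sym subr_eq.
Qed.

Lemma neqD (a b : T) k : (0 < k < N)%N -> (a - b = k%:R \/ a - b = - k%:R) -> a != b.
Proof.
move=> hk h; apply/eqP => ab; move: h; rewrite ab subrr => h.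
have nz := natr_neq0 hk.
by case: h => /eqP; rewrite eq_sym ?oppr_eq0 (negbTE nz).
Qed.

Lemma cir4E (u v : T) : Cir4 u v =
  (v == u + 1) || (v == u - 1) || (v == u + 2%:R) || (v == u - 2%:R).
Proof.
rewrite /Cir4 !cyc_stepE //.
case: (boolP (u == v)) => [/eqP <-|] //=.
have h1 : u != u + 1 by apply: (@neqD _ _ 1) => //; right; ring.
have h2 : u != u - 1 by apply: (@neqD _ _ 1) => //; left; ring.
have h3 : u != u + 2%:R by apply: (@neqD _ _ 2) => //; right; ring.
have h4 : u != u - 2%:R by apply: (@neqD _ _ 2) => //; left; ring.
by rewrite (negbTE h1) (negbTE h2) (negbTE h3) (negbTE h4).
by move=> _; rewrite orbA.
Qed.

Lemma cir2E (u v : T) : Cir2 u v = (v == u + 1) || (v == u - 1).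
Proof.
rewrite /Cir2 !cyc_stepE //.
case: (boolP (u == v)) => [/eqP <-|] //=.
have h1 : u != u + 1 by apply: (@neqD _ _ 1) => //; right; ring.
have h2 : u != u - 1 by apply: (@neqD _ _ 1) => //; left; ring.
by rewrite (negbTE h1) (negbTE h2).
Qed.

Definition nb4 (u : T) := [:: u + 1; u - 1; u + 2%:R; u - 2%:R].
Definition nb2 (u : T) := [:: u + 1; u - 1].

Lemma uniq_nb4 u : uniq (nb4 u).
Proof.
rewrite /= !inE !negb_or !andbT.
have e12 : u + 1 != u - 1 by apply: (@neqD _ _ 2) => //; left; ring.
have e13 : u + 1 != u + 2%:R by apply: (@neqD _ _ 1) => //; right; ring.
have e14 : u + 1 != u - 2%:R by apply: (@neqD _ _ 3) => //; left; ring.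
have e23 : u - 1 != u + 2%:R by apply: (@neqD _ _ 3) => //; right; ring.
have e24 : u - 1 != u - 2%:R by apply: (@neqD _ _ 1) => //; left; ring.
have e34 : u + 2%:R != u - 2%:R by apply: (@neqD _ _ 4) => //; left; ring.
by rewrite e12 e13 e14 e23 e24 e34.
Qed.

Lemma uniq_nb2 u : uniq (nb2 u).
Proof.
rewrite /= !inE andbT.
by apply: (@neqD _ _ 2) => //; left; ring.
Qed.

Lemma cir4_mem u v : Cir4 u v = (v \in nb4 u).
Proof. by rewrite cir4E !inE !orbA. Qed.
Lemma cir2_mem u v : Cir2 u v = (v \in nb2 u).
Proof. by rewrite cir2E !inE. Qed.

Lemma deg4 u : deg (@Cir4 N) u = 4%N.
Proof.
rewrite /deg (_ : 4%N = size (nb4 u)) // -(card_uniqP (uniq_nb4 u)).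
by apply: eq_card => v; rewrite inE cir4_mem.
Qed.
Lemma deg2 u : deg (@Cir2 N) u = 2%N.
Proof.
rewrite /deg (_ : 2%N = size (nb2 u)) // -(card_uniqP (uniq_nb2 u)).
by apply: eq_card => v; rewrite inE cir2_mem.
Qed.

Lemma sum4 (R : realType) u (F : T -> R) : \sum_(v | Cir4 u v) F v =
  F (u + 1) + F (u - 1) + F (u + 2%:R) + F (u - 2%:R).
Proof.
rewrite (eq_bigl (fun v => v \in nb4 u)); last by move=> v; rewrite cir4_mem.
by rewrite -big_uniq ?uniq_nb4 // !big_cons big_nil /= addr0 !addrA.
Qed.
Lemma sum2 (R : realType) u (F : T -> R) : \sum_(v | Cir2 u v) F v =
  F (u + 1) + F (u - 1).
Proof.
rewrite (eq_bigl (fun v => v \in nb2 u)); last by move=> v; rewrite cir2_mem.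
by rewrite -big_uniq ?uniq_nb2 // !big_cons big_nil /= addr0.
Qed.
End Cyc.
Section Markov.
Variable R : realType.
Variable n : nat.
Local Notation N := n.+3.+2.
Local Notation T := 'I_N.
Local Notation cfg := (config N).

Definition P (h : cfg -> R) (s : cfg) : R := step (@Cir4 N) (@Cir2 N) h s.
Definition allB : cfg := [ffun => false].

Lemma updE (s : cfg) v b w : upd s v b w = if w == v then b else s w.
Proof. by rewrite ffunE. Qed.

Definition stepF (h : cfg -> R) (s : cfg) (u : T) : R :=
  if s u then 4%:R^-1 * (h (upd s (u+1) true) + h (upd s (u-1) true)
                        + h (upd s (u+2%:R) true) + h (upd s (u-2%:R) true))
  else 2%:R^-1 * (h (upd s (u+1) false) + h (upd s (u-1) false)).

Lemma stepE (h : cfg -> R) s : P h s = N%:R^-1 * \sum_u stepF h s u.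
Proof.
rewrite /P /step mulr_sumr; apply: eq_bigr => u _; rewrite /stepF.
case E: (s u) => /=.
  by rewrite sum4 deg4; ring.
by rewrite sum2 deg2; ring.
Qed.

Lemma Nneq0 : (N%:R : R) != 0. Proof. by rewrite pnatr_eq0. Qed.

Lemma sum_const (c : R) : N%:R^-1 * \sum_(u : T) c = c.
Proof. by rewrite sumr_const card_ord -[c *+ N]mulr_natl mulKf ?Nneq0. Qed.

Lemma P_mono (f g : cfg -> R) : (forall s, f s <= g s) -> forall s, P f s <= P g s.
Proof.
move=> H s; rewrite !stepE; apply: ler_wpM2l; first by rewrite invr_ge0 ler0n.
apply: ler_sum => u _; rewrite /stepF; case: (s u); apply: ler_wpM2l;
  rewrite ?invr_ge0 ?ler0n //; rewrite ?lerD ?H //.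
Qed.

Lemma P_lin (a b : R) (f g : cfg -> R) s :
  P (fun x => a * f x + b * g x) s = a * P f s + b * P g s.
Proof.
rewrite !stepE !mulr_sumr -big_split /=; apply: eq_bigr => u _.
rewrite /stepF; case: (s u); ring.
Qed.

Lemma P_const (c : R) s : P (fun _ => c) s = c.
Proof.
rewrite stepE -[RHS](sum_const c); congr (_ * _); apply: eq_bigr => u _.
rewrite /stepF; case: (s u); lra.
Qed.

Lemma upd_allA v : upd (allA N) v true = allA N.
Proof. by apply/ffunP => w; rewrite !ffunE; case: ifP. Qed.
Lemma upd_allB v : upd allB v false = allB.
Proof. by apply/ffunP => w; rewrite !ffunE; case: ifP. Qed.

Lemma P_allA h : P h (allA N) = h (allA N).
Proof.
rewrite stepE -[RHS](sum_const (h (allA N))); congr (_ * _); apply: eq_bigr => u _.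
rewrite /stepF ffunE !upd_allA; lra.
Qed.

Lemma P_allB h : P h allB = h allB.
Proof.
rewrite stepE -[RHS](sum_const (h allB)); congr (_ * _); apply: eq_bigr => u _.
rewrite /stepF ffunE !upd_allB; lra.
Qed.
End Markov.
Section Pot.
Variable R : realType.
Variable n : nat.
Local Notation N := n.+3.+2.
Local Notation T := 'I_N.
Local Notation cfg := (config N).
Local Notation P := (@P R n).

Definition Pt (t : nat) (h : cfg -> R) : cfg -> R := iter t P h.

Lemma Pt_mono t (f g : cfg -> R) : (forall s, f s <= g s) -> forall s, Pt t f s <= Pt t g s.
Proof. elim: t => //= t IH H s; apply: P_mono => x; exact: IH. Qed.

Lemma Pt_lin t (a b : R) (f g : cfg -> R) :
  Pt t (fun x => a * f x + b * g x) = (fun x => a * Pt t f x + b * Pt t g x).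
Proof.
elim: t => //= t ->; apply/funext => s; exact: P_lin.
Qed.

Lemma Pt_const t (c : R) : Pt t (fun _ => c) = (fun _ => c).
Proof. elim: t => //= t ->; apply/funext => s; exact: P_const. Qed.

Lemma Pt_allA t h : Pt t h (allA N) = h (allA N).
Proof. elim: t => //= t <-; exact: P_allA. Qed.
Lemma Pt_allB t h : Pt t h (@allB n) = h (@allB n).
Proof. elim: t => //= t <-; exact: P_allB. Qed.

Lemma Pt_ge0 t (f : cfg -> R) : (forall s, 0 <= f s) -> forall s, 0 <= Pt t f s.
Proof.
move=> H s; have := Pt_mono t (f := fun _ => 0) H s; by rewrite Pt_const.
Qed.

Lemma hitA_Pt t : @hitA R N (@Cir4 N) (@Cir2 N) t = Pt t (@hitA R N (@Cir4 N) (@Cir2 N) 0).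
Proof. by elim: t => //= t ->. Qed.

Definition Phi (g : bool -> bool -> bool -> R) (s : cfg) : R :=
  \prod_(i : T) g (s i) (s (i + 1)) (s (i + 2%:R)).

Definition rloc (g : bool -> bool -> bool -> R) a b c d e b' : R :=
  g a b b' / g a b c * (g b b' d / g b c d) * (g b' d e / g c d e).

Lemma Phi_upd g : (forall a b c, 0 < g a b c) -> forall (s : cfg) v b',
  Phi g (upd s v b') = Phi g s *
     rloc g (s (v - 2%:R)) (s (v - 1)) (s v) (s (v + 1)) (s (v + 2%:R)) b'.
Proof.
move=> gpos s v b'.
have d21 : v - 1 != v - 2%:R by apply: (@neqD _ _ _ 1) => //; left; ring.
have d20 : v != v - 2%:R by apply: (@neqD _ _ _ 2) => //; left; ring.
have d10 : v != v - 1 by apply: (@neqD _ _ _ 1) => //; left; ring.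
rewrite /Phi (bigD1 (v - 2%:R)) // [in RHS](bigD1 (v - 2%:R)) //=.
rewrite (bigD1 (v - 1)) ?d21 // [in RHS](bigD1 (v - 1)) ?d21 //=.
rewrite (bigD1 v) ?d20 ?d10 // [in RHS](bigD1 v) ?d20 ?d10 //=.
have -> : \prod_(i < N | (i != v - 2%:R) && (i != v - 1) && (i != v))
    g (upd s v b' i) (upd s v b' (i + 1)) (upd s v b' (i + 2%:R)) =
  \prod_(i < N | (i != v - 2%:R) && (i != v - 1) && (i != v))
    g (s i) (s (i + 1)) (s (i + 2%:R)).
  apply: eq_bigr => i /andP[/andP[h2 h1] h0]; rewrite !updE (negbTE h0).
  have -> : (i + 1 == v) = false.
    apply/negbTE; apply: contra h1 => /eqP <-; by rewrite addrK.
  have -> : (i + 2%:R == v) = false.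
    apply/negbTE; apply: contra h2 => /eqP <-; by rewrite addrK.
  done.
have e1 : v - 2%:R + 1 = v - 1 by ring.
have e2 : v - 2%:R + 2%:R = v by ring.
have e3 : v - 1 + 1 = v by ring.
have e4 : v - 1 + 2%:R = v + 1 by ring.
have n1 : (v + 1 == v) = false.
  by apply/negbTE; rewrite eq_sym; apply: (@neqD _ _ _ 1) => //; right; ring.
have n2 : (v + 2%:R == v) = false.
  by apply/negbTE; rewrite eq_sym; apply: (@neqD _ _ _ 2) => //; right; ring.
rewrite e1 e2 e3 e4 !updE eqxx n1 n2.
rewrite [v - 2%:R == v]eq_sym (negbTE d20) [v - 1 == v]eq_sym (negbTE d10) /rloc.
set X := \prod_(i < N | _) _.
have gn : forall a b c, g a b c != 0 by move=> a b c; rewrite gt_eqF.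
field.
by rewrite !gn.
Qed.
End Pot.
Section Drift.
Variable R : realType.
Variable n : nat.
Local Notation N := n.+3.+2.
Local Notation T := 'I_N.
Local Notation cfg := (config N).
Local Notation P := (@P R n).
Local Notation Phi := (@Phi R n).

Lemma reidx (F : T -> T -> R) (d : T) :
  \sum_(u : T) F u (u + d) = \sum_(v : T) F (v - d) v.
Proof.
rewrite [RHS](reindex_inj (addIr d)) /=; apply: eq_bigr => u _; by rewrite addrK.
Qed.

Definition bR (b : bool) : R := (nat_of_bool b)%:R.

Definition q (g : bool -> bool -> bool -> R) a b c d e : R :=
  4%:R^-1 * (bR a + bR b + bR d + bR e) * (rloc g a b c d e true - 1)
  + 2%:R^-1 * (bR (~~ b) + bR (~~ d)) * (rloc g a b c d e false - 1).

Lemma drift g : (forall a b c, 0 < g a b c) -> forall s : cfg,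
  P (Phi g) s - Phi g s = Phi g s * (N%:R^-1 *
    \sum_(v : T) q g (s (v - 2%:R)) (s (v - 1)) (s v) (s (v + 1)) (s (v + 2%:R))).
Proof.
move=> gpos s.
pose Rr (v : T) b := rloc g (s (v - 2%:R)) (s (v - 1)) (s v) (s (v + 1)) (s (v + 2%:R)) b.
pose X (u : T) := bR (s u) * 4%:R^-1 * (Rr (u + 1) true - 1)
   + bR (s u) * 4%:R^-1 * (Rr (u - 1) true - 1)
   + bR (s u) * 4%:R^-1 * (Rr (u + 2%:R) true - 1)
   + bR (s u) * 4%:R^-1 * (Rr (u - 2%:R) true - 1)
   + bR (~~ s u) * 2%:R^-1 * (Rr (u + 1) false - 1)
   + bR (~~ s u) * 2%:R^-1 * (Rr (u - 1) false - 1).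
have eX : \sum_u stepF (Phi g) s u = Phi g s * \sum_(u : T) (1 + X u).
  rewrite mulr_sumr; apply: eq_bigr => u _.
  rewrite /stepF /X /Rr !(Phi_upd gpos) /bR; case: (s u) => /=; field; done.
rewrite stepE eX big_split /= sumr_const card_ord.
have -> : \sum_(i < N) X i = \sum_(v : T) q g (s (v - 2%:R)) (s (v - 1)) (s v) (s (v + 1)) (s (v + 2%:R)).
  rewrite /X !big_split /=.
  rewrite (reidx (fun u v => bR (s u) * 4%:R^-1 * (Rr v true - 1))).
  rewrite (reidx (fun u v => bR (s u) * 4%:R^-1 * (Rr v true - 1)) (-1)).
  rewrite (reidx (fun u v => bR (s u) * 4%:R^-1 * (Rr v true - 1)) (2%:R)).
  rewrite (reidx (fun u v => bR (s u) * 4%:R^-1 * (Rr v true - 1)) (- 2%:R)).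
  rewrite (reidx (fun u v => bR (~~ s u) * 2%:R^-1 * (Rr v false - 1)) 1).
  rewrite (reidx (fun u v => bR (~~ s u) * 2%:R^-1 * (Rr v false - 1)) (-1)).
  rewrite -!big_split /=; apply: eq_bigr => v _.
  rewrite !opprK /q /Rr; ring.
have nN := Nneq0 R n.
rewrite -[_ *+ N]mulr_natl mulr1; by field.
Qed.

Lemma gauge (h : bool -> bool -> bool -> bool -> R) (s : cfg) :
  \sum_(v : T) (h (s (v - 2%:R)) (s (v - 1)) (s v) (s (v + 1))
              - h (s (v - 1)) (s v) (s (v + 1)) (s (v + 2%:R))) = 0.
Proof.
rewrite sumrB; apply/eqP; rewrite subr_eq0; apply/eqP.
rewrite (reindex_inj (addIr 1)) /=; apply: eq_bigr => v _.
have -> : v + 1 - 2%:R = v - 1 by ring.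
have -> : v + 1 - 1 = v by ring.
have -> : v + 1 + 1 = v + 2%:R by ring.
done.
Qed.

Lemma Phi_ge0 g : (forall a b c, 0 < g a b c) -> forall s, 0 <= Phi g s.
Proof. by move=> gpos s; apply: prodr_ge0 => i _; apply: ltW. Qed.

Lemma drift_le g (h : bool -> bool -> bool -> bool -> R) :
  (forall a b c, 0 < g a b c) ->
  (forall a b c d e, q g a b c d e + h a b c d - h b c d e <= 0) ->
  forall s, P (Phi g) s <= Phi g s.
Proof.
move=> gpos H s; rewrite -subr_le0 drift //.
apply: mulr_ge0_le0; first exact: Phi_ge0.
apply: mulr_ge0_le0; first by rewrite invr_ge0 ler0n.
have E : \sum_(v : T) q g (s (v - 2%:R)) (s (v - 1)) (s v) (s (v + 1)) (s (v + 2%:R)) =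
  \sum_(v : T) (q g (s (v - 2%:R)) (s (v - 1)) (s v) (s (v + 1)) (s (v + 2%:R)) +
     (h (s (v - 2%:R)) (s (v - 1)) (s v) (s (v + 1))
              - h (s (v - 1)) (s v) (s (v + 1)) (s (v + 2%:R)))).
  by rewrite -[LHS]addr0 -[X in _ + X = _](gauge h s) -big_split.
rewrite E; apply: sumr_le0 => v _; rewrite addrA; exact: H.
Qed.

Lemma drift_ge g (h : bool -> bool -> bool -> bool -> R) :
  (forall a b c, 0 < g a b c) ->
  (forall a b c d e, 0 <= q g a b c d e + h a b c d - h b c d e) ->
  forall s, Phi g s <= P (Phi g) s.
Proof.
move=> gpos H s; rewrite -subr_ge0 drift //.
apply: mulr_ge0; first exact: Phi_ge0.
apply: mulr_ge0; first by rewrite invr_ge0 ler0n.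
have E : \sum_(v : T) q g (s (v - 2%:R)) (s (v - 1)) (s v) (s (v + 1)) (s (v + 2%:R)) =
  \sum_(v : T) (q g (s (v - 2%:R)) (s (v - 1)) (s v) (s (v + 1)) (s (v + 2%:R)) +
     (h (s (v - 2%:R)) (s (v - 1)) (s v) (s (v + 1))
              - h (s (v - 1)) (s v) (s (v + 1)) (s (v + 2%:R)))).
  by rewrite -[LHS]addr0 -[X in _ + X = _](gauge h s) -big_split.
rewrite E; apply: sumr_ge0 => v _; rewrite addrA; exact: H.
Qed.
End Drift.
Section Num. Variable R : realType.
Definition gL (a b c : bool) : R :=
  match a, b, c with
  | false, false, false => (1%:R)
  | false, false, true => (471%:R / 500%:R)
  | false, true, false => (121%:R / 125%:R)
  | false, true, true => (873%:R / 1000%:R)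
  | true, false, false => (471%:R / 500%:R)
  | true, false, true => (897%:R / 1000%:R)
  | true, true, false => (873%:R / 1000%:R)
  | true, true, true => (197%:R / 250%:R)
  end.
Definition hL (a b c d : bool) : R :=
  match a, b, c, d with
  | false, false, false, false => (0%:R)
  | false, false, false, true => - (113%:R / 4000%:R)
  | false, false, true, false => - (81%:R / 1000%:R)
  | false, false, true, true => - (533%:R / 4000%:R)
  | false, true, false, false => (67%:R / 800%:R)
  | false, true, false, true => (57%:R / 800%:R)
  | false, true, true, false => (9%:R / 4000%:R)
  | false, true, true, true => (7%:R / 4000%:R)
  | true, false, false, false => (13%:R / 400%:R)
  | true, false, false, true => - (57%:R / 4000%:R)
  | true, false, true, false => - (71%:R / 1000%:R)
  | true, false, true, true => - (533%:R / 4000%:R)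
  | true, true, false, false => (69%:R / 500%:R)
  | true, true, false, true => (131%:R / 1000%:R)
  | true, true, true, false => (11%:R / 4000%:R)
  | true, true, true, true => (9%:R / 4000%:R)
  end.
Definition hU (a b c d : bool) : R :=
  match a, b, c, d with
  | false, false, false, false => - (1%:R / 4%:R)
  | false, false, false, true => - (1%:R / 3%:R)
  | false, false, true, false => - (5%:R / 12%:R)
  | false, false, true, true => - (1%:R / 2%:R)
  | false, true, false, false => (0%:R)
  | false, true, false, true => (0%:R)
  | false, true, true, false => - (1%:R / 4%:R)
  | false, true, true, true => - (1%:R / 4%:R)
  | true, false, false, false => - (1%:R / 6%:R)
  | true, false, false, true => - (1%:R / 4%:R)
  | true, false, true, false => - (1%:R / 4%:R)
  | true, false, true, true => - (1%:R / 3%:R)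
  | true, true, false, false => (0%:R)
  | true, true, false, true => (0%:R)
  | true, true, true, false => - (1%:R / 4%:R)
  | true, true, true, true => - (1%:R / 4%:R)
  end.
Definition gU (a b c : bool) : R := if a then 2%:R / 3%:R else 1.
Lemma gL_pos a b c : 0 < gL a b c.
Proof. by case: a; case: b; case: c; rewrite /gL /=; lra. Qed.
Lemma gU_pos a b c : 0 < gU a b c.
Proof. by case: a; rewrite /gU /=; lra. Qed.
Lemma numL a b c d e : q gL a b c d e + hL a b c d - hL b c d e <= 0.
Proof.
by case: a; case: b; case: c; case: d; case: e; rewrite /q /rloc /bR /gL /hL /=; lra.
Qed.
Lemma numU a b c d e : 0 <= q gU a b c d e + hU a b c d - hU b c d e.
Proof.
by case: a; case: b; case: c; case: d; case: e; rewrite /q /rloc /bR /gU /hU /=; lra.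
Qed.
End Num.

Section Bounds.
Variable R : realType.
Variable n : nat.
Local Notation N := n.+3.+2.
Local Notation T := 'I_N.
Local Notation cfg := (config N).
Local Notation P := (@P R n).
Local Notation Pt := (@Pt R n).
Local Notation Phi := (@Phi R n).
Local Notation allB := (@allB n).
Local Notation hit := (@hitA R N (@Cir4 N) (@Cir2 N)).

Definition indB (s : cfg) : R := if s == allB then 1 else 0.
Definition nab (s : cfg) : R := 1 - hit 0 s - indB s.

Lemma allA_neq_allB : allA N != allB.
Proof. by apply/eqP => /ffunP /(_ ord0); rewrite !ffunE. Qed.

Lemma P_sub1 (f : cfg -> R) s : P (fun x => 1 - f x) s = 1 - P f s.
Proof.
have -> : (fun x => 1 - f x) = (fun x => 1 * (fun _ => 1) x + (-1) * f x).
  by apply/funext => x /=; ring.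
by rewrite P_lin P_const; ring.
Qed.

Lemma Pt_sub1 t (f : cfg -> R) s : Pt t (fun x => 1 - f x) s = 1 - Pt t f s.
Proof.
have -> : (fun x => 1 - f x) = (fun x => 1 * (fun _ => 1) x + (-1) * f x).
  by apply/funext => x /=; ring.
by rewrite Pt_lin Pt_const /=; ring.
Qed.

Lemma Pt_scale t (c : R) (f : cfg -> R) s : Pt t (fun x => c * f x) s = c * Pt t f s.
Proof.
have -> : (fun x => c * f x) = (fun x => c * f x + 0 * f x).
  by apply/funext => x /=; ring.
by rewrite Pt_lin /=; ring.
Qed.

Lemma hit_ge0 t s : 0 <= hit t s.
Proof. rewrite hitA_Pt; apply: Pt_ge0 => x /=; by case: eqP. Qed.

Lemma hit_mono t s : hit t s <= hit t.+1 s.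
Proof.
rewrite [hit t]hitA_Pt [hit t.+1]hitA_Pt /Pt iterSr; apply: Pt_mono => x.
case: (eqVneq x (allA N)) => [->|xA]; first by rewrite P_allA.
have := Pt_ge0 1 (f := hit 0) (fun y => hit_ge0 0 y) x.
by rewrite /= (negbTE xA).
Qed.

Lemma single_upd (v : T) : single v = upd allB v true.
Proof. by apply/ffunP => w; rewrite !ffunE; case: eqP. Qed.

Lemma Phi_allB g : g false false false = 1 -> Phi g allB = 1.
Proof. by move=> g0; rewrite /Phi big1 // => i _; rewrite !ffunE. Qed.

Lemma upper t (v : T) :
  hit t (single v) * (1 - (2%:R / 3%:R) ^+ N) <= 3%:R^-1.
Proof.
set K := 1 - _.
pose phU := fun x => 1 - Phi (gU R) x.
have super : forall x, P phU x <= phU x.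
  move=> x; rewrite /phU P_sub1 lerB //; exact: (drift_ge (gU_pos R) (numU R)).
have superT : forall t x, Pt t phU x <= phU x.
  elim=> // k IH x /=; apply: le_trans (super x); exact: P_mono.
have gU1 : forall a b c, 0 <= gU R a b c <= 1.
  by move=> a b c; rewrite /gU; case: a; apply/andP; split; lra.
have PhiU_le1 : forall x, Phi (gU R) x <= 1.
  by move=> x; apply: prodr_ile1 => i _; apply: gU1.
have PhiUA : Phi (gU R) (allA N) = (2%:R / 3%:R) ^+ N.
  rewrite /Phi (eq_bigr (fun _ => 2%:R / 3%:R)); last by move=> i _; rewrite !ffunE.
  by rewrite prodr_const card_ord.
have ind_le : forall x, K * hit 0 x <= phU x.
  move=> x /=; case: (eqVneq x (allA N)) => [->|xA]; first by rewrite /phU PhiUA mulr1.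
  by rewrite mulr0 /phU subr_ge0.
have : Pt t (fun x => K * hit 0 x) (single v) <= phU (single v).
  apply: le_trans (superT t _); exact: Pt_mono.
rewrite Pt_scale -hitA_Pt mulrC /phU single_upd (Phi_upd (gU_pos R)) Phi_allB // mul1r.
move=> H; apply: le_trans H _; rewrite !ffunE /rloc /gU /=; lra.
Qed.

Definition cc : R := (N%:R * 2%:R)^-1.

Lemma cc_ge0 : 0 <= cc. Proof. by rewrite /cc invr_ge0 mulr_ge0 ?ler0n. Qed.
Lemma cc_le1 : cc <= 1.
Proof.
have h1 : (1 <= N%:R :> R) by rewrite ler1n.
rewrite /cc invr_le1 //; first lra.
by rewrite unitfE; lra.
Qed.

Lemma stepF_ge0 (h : cfg -> R) (s : cfg) (u : T) : (forall x, 0 <= h x) -> 0 <= stepF h s u.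
Proof.
move=> H; rewrite /stepF; case: (s u).
  have := H (upd s (u + 1) true); have := H (upd s (u - 1) true);
  have := H (upd s (u + 2%:R) true); have := H (upd s (u - 2%:R) true); lra.
have := H (upd s (u + 1) false); have := H (upd s (u - 1) false); lra.
Qed.

Lemma P_one (h : cfg -> R) (s : cfg) (u : T) : (forall x, 0 <= h x) -> s u = false ->
  cc * h (upd s (u + 1) false) <= P h s.
Proof.
move=> H su; rewrite stepE (bigD1 u) //= {1}/stepF su.
have S0 : 0 <= \sum_(i < N | i != u) stepF h s i.
  by apply: sumr_ge0 => i _; apply: stepF_ge0.
have := H (upd s (u - 1) false); move: (h (upd s (u - 1) false)) => Y hY.
move: (h (upd s (u + 1) false)) (H (upd s (u + 1) false)) => X hX.
rewrite /cc invfM -mulrA; apply: ler_wpM2l; first by rewrite invr_ge0 ler0n.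
lra.
Qed.

Lemma exists_BA (s : cfg) : s != allA N -> s != allB ->
  exists u, (s u = false) /\ s (u + 1).
Proof.
move=> sA sB.
case: (pickP (fun u => ~~ s u && s (u + 1))) => [u /andP[h1 h2]|H].
  by exists u; split=> //; apply/negbTE.
exfalso.
have [u0 hu0] : exists u0, s u0 = false.
  case: (pickP (fun u => ~~ s u)) => [u /negbTE hu|H0]; first by exists u.
  by move: sA; case/eqP; apply/ffunP => w; rewrite ffunE; have := H0 w => /= /negbFE.
have [w hw] : exists w, s w.
  case: (pickP (fun u => s u)) => [u hu|H0]; first by exists u.
  by move: sB; case/eqP; apply/ffunP => w; rewrite ffunE; have := H0 w.
have claim : forall k : nat, s (u0 + k%:R) = false.
  elim=> [|k IH]; first by rewrite addr0.
  have := H (u0 + k%:R); rewrite IH /= -natr1 addrA.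
  done.
have := claim (nat_of_ord (w - u0)); rewrite natr_Zp addrC subrK.
by rewrite hw.
Qed.

Definition cnt (s : cfg) := #|[set u | s u]|.

Lemma cnt_upd (s : cfg) v : s v -> (cnt (upd s v false) < cnt s)%N.
Proof.
move=> sv; apply: proper_card; apply/properP; split.
  by apply/fintype.subsetP => u; rewrite !inE !ffunE; case: ifP.
apply: (@ex_intro2 _ _ _ v); first by rewrite inE.
by rewrite inE ffunE eqxx.
Qed.

Lemma cnt0 (s : cfg) : cnt s = 0%N -> s = allB.
Proof.
move=> /eqP; rewrite cards_eq0 => /eqP H; apply/ffunP => u; rewrite ffunE.
apply/negbTE/negP => su.
have : u \in [set u | s u] by rewrite inE.
by rewrite H inE.
Qed.

Lemma absorb m (s : cfg) : s != allA N -> (cnt s <= m)%N -> cc ^+ m <= Pt m indB s.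
Proof.
elim: m s => [|m IH] s sA.
  rewrite leqn0 => /eqP /cnt0 ->; by rewrite /= /indB eqxx expr0.
move=> cm.
case: (eqVneq s allB) => [->|sB].
  by rewrite Pt_allB /indB eqxx exprn_ile1 ?cc_ge0 ?cc_le1.
have [u [su su1]] := exists_BA sA sB.
pose s' := upd s (u + 1) false.
have s'A : s' != allA N.
  by apply/eqP => /ffunP /(_ (u + 1)); rewrite !ffunE eqxx.
have cs' : (cnt s' <= m)%N.
  by rewrite -ltnS; apply: leq_trans cm; apply: cnt_upd.
rewrite exprS /=.
apply: le_trans (P_one _ su); last first.
  by move=> x; apply: Pt_ge0 => y; rewrite /indB; case: eqP.
apply: ler_wpM2l; first exact: cc_ge0.
exact: IH.
Qed.

Lemma nab01 s : 0 <= nab s <= 1.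
Proof.
rewrite /nab /indB /=.
case: (eqVneq s (allA N)) => [->|sA].
  by rewrite (negbTE allA_neq_allB); apply/andP; split; lra.
case: (eqVneq s allB) => _; apply/andP; split; lra.
Qed.

Definition aa : R := 1 - cc ^+ N.

Lemma aa_ge0 : 0 <= aa.
Proof. by rewrite /aa subr_ge0 exprn_ile1 ?cc_ge0 ?cc_le1. Qed.

Lemma nab_step s : Pt N nab s <= aa * nab s.
Proof.
have PtN : forall x, Pt N nab x = 1 - Pt N (hit 0) x - Pt N indB x.
  move=> x; have -> : nab = (fun y => 1 * (fun y => 1 - hit 0 y) y + (-1) * indB y).
    by apply/funext => y; rewrite /nab; ring.
  by rewrite Pt_lin Pt_sub1; ring.
case: (eqVneq s (allA N)) => [->|sA].
  by rewrite Pt_allA /nab /indB /= eqxx (negbTE allA_neq_allB); lra.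
case: (eqVneq s allB) => [->|sB].
  by rewrite Pt_allB /nab /indB /= eqxx eq_sym (negbTE allA_neq_allB); lra.
have h1 : nab s = 1 by rewrite /nab /indB /= (negbTE sA) (negbTE sB); ring.
rewrite h1 mulr1 PtN /aa.
have := absorb sA (leq_trans (max_card _) (eq_leq (card_ord N))).
have := Pt_ge0 N (f := hit 0) (fun y => hit_ge0 0 y) s.
lra.
Qed.

Lemma nab_iter j s : Pt (j * N) nab s <= aa ^+ j.
Proof.
suff : Pt (j * N) nab s <= aa ^+ j * nab s.
  move=> H; apply: le_trans H _; rewrite -[X in _ <= X]mulr1.
  apply: ler_wpM2l; [exact: exprn_ge0 aa_ge0 | by case/andP: (nab01 s)].
elim: j s => [|j IH] s; first by rewrite mul0n /= expr0 mul1r.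
rewrite mulSn /Pt iterD.
apply: le_trans (Pt_mono N (g := fun x => aa ^+ j * nab x) IH s) _.
rewrite Pt_scale exprSr -mulrA; apply: ler_wpM2l; first exact: exprn_ge0 aa_ge0.
exact: nab_step.
Qed.

Lemma lower j (v : T) :
  1 - rloc (gL R) false false false false false true - aa ^+ j <= hit (j * N) (single v).
Proof.
pose phL := fun x => 1 - Phi (gL R) x.
have sub : forall x, phL x <= P phL x.
  move=> x; rewrite /phL P_sub1 lerB //; exact: (drift_le (gL_pos R) (numL R)).
have subT : forall t x, phL x <= Pt t phL x.
  elim=> // k IH x /=; apply: le_trans (sub x) _; exact: P_mono.
have phL_le : forall x, phL x <= 1 - indB x.
  move=> x; rewrite /phL /indB; case: (eqVneq x allB) => [->|_].
    by rewrite Phi_allB.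
  have := Phi_ge0 (gL_pos R) x; lra.
have A : phL (single v) <= 1 - Pt (j * N) indB (single v).
  apply: le_trans (subT (j * N) _) _.
  rewrite -Pt_sub1; exact: Pt_mono.
have B : Pt (j * N) nab (single v) =
   1 - Pt (j * N) (hit 0) (single v) - Pt (j * N) indB (single v).
  have -> : nab = (fun y => 1 * (fun y => 1 - hit 0 y) y + (-1) * indB y).
    by apply/funext => y; rewrite /nab; ring.
  by rewrite Pt_lin Pt_sub1; ring.
have C := nab_iter j (single v).
have D : phL (single v) = 1 - rloc (gL R) false false false false false true.
  rewrite /phL single_upd (Phi_upd (gL_pos R)) Phi_allB // mul1r.
  by rewrite !ffunE.
rewrite hitA_Pt -D.
lra.
Qed.
End Bounds.

Section Final.
Variable R : realType.
Variable n : nat.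
Local Notation N := n.+3.+2.
Local Notation T := 'I_N.
Local Notation hit := (@hitA R N (@Cir4 N) (@Cir2 N)).

Definition useq (t : nat) : R := N%:R^-1 * \sum_(v : T) hit t (single v).

Lemma useq_ge0 t : 0 <= useq t.
Proof. by rewrite /useq mulr_ge0 ?invr_ge0 ?ler0n // sumr_ge0 // => v _; apply: hit_ge0. Qed.

Lemma useq_nd : {homo useq : a b / (a <= b)%N >-> a <= b}.
Proof.
apply/nondecreasing_seqP => t; rewrite /useq; apply: ler_wpM2l.
  by rewrite invr_ge0 ler0n.
by apply: ler_sum => v _; apply: hit_mono.
Qed.

Lemma useq_avg (c : R) : (forall v : T, hit 0 (single v) = hit 0 (single v)) -> True.
Proof. by []. Qed.

Lemma avg_le (c : R) t : (forall v : T, hit t (single v) <= c) -> useq t <= c.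
Proof.
move=> H; rewrite /useq -[X in _ <= X](sum_const n c).
apply: ler_wpM2l; first by rewrite invr_ge0 ler0n.
by apply: ler_sum => v _.
Qed.

Lemma avg_ge (c : R) t : (forall v : T, c <= hit t (single v)) -> c <= useq t.
Proof.
move=> H; rewrite /useq -[X in X <= _](sum_const n c).
apply: ler_wpM2l; first by rewrite invr_ge0 ler0n.
by apply: ler_sum => v _.
Qed.

Definition KK : R := 1 - (2%:R / 3%:R) ^+ N.

Lemma hit_ub t (v : T) : (10 <= n)%N -> hit t (single v) <= 335%:R / 1000%:R.
Proof.
move=> hn.
have H := upper R t v.
have e : (2%:R / 3%:R : R) ^+ N <= (2%:R / 3%:R) ^+ 15.
  apply: ler_wiXn2l; [lra | lra | lia].
have e15 : (2%:R / 3%:R : R) ^+ 15 <= 1 / 400.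
  rewrite !exprS expr0; lra.
have h0 := hit_ge0 R t (single v).
move: H e e15 h0; set X := hit t (single v); set Y := (2%:R / 3%:R : R) ^+ N.
move=> H e e15 h0.
nra.
Qed.

Lemma useq_cvg : cvgn useq.
Proof.
case: (leqP 10 n) => hn.
  apply: nondecreasing_is_cvgn; first exact: useq_nd.
  exists (335%:R / 1000%:R) => _ [t _ <-]; apply: avg_le => v; exact: hit_ub.
apply: nondecreasing_is_cvgn; first exact: useq_nd.
exists 1 => _ [t _ <-]; apply: avg_le => v.
have H := upper R t v.
have e : (2%:R / 3%:R : R) ^+ N <= 2%:R / 3%:R.
  by rewrite -[X in _ <= X]expr1; apply: ler_wiXn2l; [lra | lra | lia].
have h0 := hit_ge0 R t (single v).
move: H e h0; set X := hit t (single v); set Y := (2%:R / 3%:R : R) ^+ N.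
move=> H e h0.
have y0 : 0 <= Y by rewrite /Y exprn_ge0 //; lra.
nra.
Qed.

Lemma rho_upper : (10 <= n)%N -> @rho R N (@Cir4 N) (@Cir2 N) <= 335%:R / 1000%:R :> R.
Proof.
move=> hn; rewrite /rho -/useq.
apply: limr_le; first exact: useq_cvg.
by apply: nearW => t; apply: avg_le => v; exact: hit_ub.
Qed.

Lemma bern (a : R) j : 0 <= a <= 1 -> a ^+ j * (1 + j%:R * (1 - a)) <= 1.
Proof.
move=> /andP[a0 a1]; elim: j => [|j IH]; first by rewrite expr0 mul0r addr0 mul1r.
have X0 : 0 <= a ^+ j := exprn_ge0 j a0.
have X1 : a ^+ j <= 1 := exprn_ile1 j a0 a1.
move: IH X0 X1; rewrite exprS -natr1; set X := a ^+ j => IH X0 X1.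
have h1 : a * (X * (1 + j%:R * (1 - a))) <= a * 1 by apply: ler_wpM2l.
have h2 : a * X * (1 - a) <= 1 * (1 - a).
  by apply: ler_wpM2r; [lra | nra].
nra.
Qed.

Lemma rho_lower : 141%:R / 1000%:R <= @rho R N (@Cir4 N) (@Cir2 N) :> R.
Proof.
rewrite /rho -/useq.
set kap := 1 - rloc (gL R) false false false false false true.
have kapv : kap = 1 - (471%:R / 500%:R) * (121%:R / 125%:R) * (471%:R / 500%:R).
  by rewrite /kap /rloc /gL /=; field.
have Hj : forall j, kap - aa R n ^+ j <= limn useq.
  move=> j; apply: le_trans (nondecreasing_cvgn_le useq_nd useq_cvg (j * N)).
  apply: avg_ge => v; exact: lower.
set b := 1 - aa R n.
have bpos : 0 < b.
  rewrite /b /aa opprB addrCA subrr addr0 exprn_gt0 // /cc invr_gt0 mulr_gt0 // ltr0n //.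
have a01 : 0 <= aa R n <= 1.
  apply/andP; split; first exact: aa_ge0.
  by rewrite /b in bpos; lra.
pose j := Num.Def.archi_bound (b^-1 * (200%:R * 200%:R)).
have hj : b^-1 * (200%:R * 200%:R) < j%:R.
  by apply: archi_boundP; rewrite mulr_ge0 // ?invr_ge0 ?ler0n // ltW.
have hjb : (200%:R * 200%:R) < j%:R * b.
  have h : b^-1 * (200%:R * 200%:R) * b < j%:R * b by rewrite ltr_pM2r.
  apply: le_lt_trans h.
  by rewrite mulrAC mulVf ?mul1r // gt_eqF.
have B := bern j a01.
have X0 : 0 <= aa R n ^+ j := exprn_ge0 j (aa_ge0 R n).
have := Hj j.
move: B X0 hjb; rewrite -/b; set X := aa R n ^+ j; set Y := j%:R * b.
move=> B X0 hjb.
rewrite kapv => hk.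
nra.
Qed.
End Final.

Lemma einf_lb (R : realType) (u : (\bar R)^nat) (a : \bar R) (n0 : nat) :
  (forall k, (n0 <= k)%N -> (a <= u k)%E) -> (a <= limn_einf u)%E.
Proof.
move=> H; rewrite limn_einf_lim; apply: lime_ge; first exact: is_cvg_einfs.
exists n0 => // m /= hm; apply/ereal_infP => _ [k /= hk <-]; apply: H.
exact: leq_trans hk.
Qed.
Lemma esup_ub (R : realType) (u : (\bar R)^nat) (a : \bar R) (n0 : nat) :
  (forall k, (n0 <= k)%N -> (u k <= a)%E) -> (limn_esup u <= a)%E.
Proof.
move=> H; rewrite limn_esup_lim; apply: lime_le; first exact: is_cvg_esups.
exists n0 => // m /= hm; apply/ereal_supP => _ [k /= hk <-]; apply: H.
exact: leq_trans hk.
Qed.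

Unset Implicit Arguments.
Local Open Scope ereal_scope.

Theorem theorem3 (R : realType) :
  let r := fun N : nat => (@rho R N (@Cir4 N) (@Cir2 N))%:E in
  ((138%:R / 1000%:R : R)%:E < limn_einf r) /\
  (limn_einf r <= limn_esup r) /\
  (limn_esup r < (34%:R / 100%:R : R)%:E).
Proof.
move=> r.
have L : ((141%:R / 1000%:R : R)%:E <= limn_einf r).
  apply: (@einf_lb _ _ _ 5) => k hk.
  have [m ->] : exists m, k = m.+3.+2 by exists (k - 5)%N; lia.
  rewrite /r lee_fin; exact: rho_lower.
have U : (limn_esup r <= (335%:R / 1000%:R : R)%:E).
  apply: (@esup_ub _ _ _ 15) => k hk.
  have [m [-> hm]] : exists m, k = m.+3.+2 /\ (10 <= m)%N by exists (k - 5)%N; split; lia.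
  rewrite /r lee_fin; exact: rho_upper.
split; first by apply: lt_le_trans L; rewrite lte_fin; lra.
split; first exact: limn_einf_sup.
by apply: le_lt_trans U _; rewrite lte_fin; lra.
Qed.
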